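(* Let $X$ be a topological space with $|X|\ge 2$, $G$ an infinite Abelian group, and $f\colon G\to X$ a Korovin mapping. Then the Korovin orbit $G_f$ is Hausdorff if and only if the space $X$ contains two disjoint nonempty open sets. (In particular, every Korovin orbit in $X^G$ is Hausdorff if and only if some Korovin orbit in $X^G$ is Hausdorff.)
   Context: $X^G$ carries the product topology. For $f\in X^G$ and $g\in G$ let $gf\in X^G$ be given by $(gf)(x)=f(xg)$, and let $G_f=\{gf:g\in G\}\subseteq X^G$ with the subspace topology. The map $f\colon G\to X$ is a Korovin mapping if $\pi_M(G_f)=X^M$ for every countable $M\subseteq G$, where $\pi_M\colon X^G\to X^M$ is the projection; in that case $G_f$ is called a Korovin orbit. *)

(* Defs.v *)
From HB Require Import structures.
From mathcomp Require Import all_boot all_order all_algebra.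
From mathcomp Require Import all_classical all_reals all_analysis.
Set Implicit Arguments. Unset Strict Implicit. Unset Printing Implicit Defensive.
Import Order.TTheory GRing.Theory Num.Theory.
Local Open Scope classical_set_scope.
Local Open Scope ring_scope.

(* The abelian group G is written additively (G : zmodType); the action
   (g f)(x) = f(x g) becomes (g f)(x) = f (x + g).  X^G carries the product
   topology: the library's {ptws G -> X}. *)

Definition shift_act (G : zmodType) (X : topologicalType)
  (f : G -> X) (g : G) : {ptws G -> X} := fun x => f (x + g).

Definition orbit_set (G : zmodType) (X : topologicalType) (f : G -> X)
  : set {ptws G -> X} := range (shift_act f).

Definition korovin_mapping (G : zmodType) (X : topologicalType) (f : G -> X)
  : Prop :=
  forall M : set G, countable M ->
  forall h : M -> X,
  exists2 p, orbit_set f p & forall m : M, p (set_val m) = h m.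

(* Main.v *)
Require Import Defs.
From HB Require Import structures.
From mathcomp Require Import all_boot all_order all_algebra.
From mathcomp Require Import all_classical all_reals all_analysis.
Import GRing.Theory.
Local Open Scope classical_set_scope.
Local Open Scope ring_scope.
Section S.
Variables (X : topologicalType) (G : zmodType) (f : G -> X).
Local Notation T := (set_type (orbit_set f)).
Lemma proj_cont (m : G) : continuous (fun g : {ptws G -> X} => g m).
Proof. move=> x; exact: (@proj_continuous G (fun _ => X) m x). Qed.
Lemma val_cont : continuous (set_val : T -> {ptws G -> X}).
Proof. exact: initial_continuous. Qed.
Lemma coord_cont (m : G) : continuous (fun r : T => set_val r m).
Proof. move=> x; exact: (@continuous_comp _ _ _ (set_val : T -> {ptws G -> X}) (fun g : {ptws G -> X} => g m) x (val_cont x) (proj_cont m _)). Qed.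
Lemma dir2 : korovin_mapping f ->
  (exists U V : set X, [/\ open U, open V, U !=set0, V !=set0 & U `&` V = set0]) ->
  hausdorff_space T.
Proof.
move=> kor [U [V [oU oV [u Uu] [v Vv] UV0]]].
rewrite open_hausdorff => p q pq.
have [a _ pa] : orbit_set f (set_val p) by case: p {pq} => x px; exact: (set_mem px).
have [b _ qb] : orbit_set f (set_val q) by case: q {pq} => x px; exact: (set_mem px).
have ab : a != b.
  apply: contraNneq pq => eab; move: p q pa qb => [x px] [y py] /= pa qb.
  have exy : x = y.
    transitivity (shift_act f a); [symmetry; exact: pa | rewrite eab; exact: qb].
  subst y; by rewrite (Prop_irrelevance px py).
pose c := b - a.
have c0 : c != 0 by rewrite subr_eq0 eq_sym.
pose M : set G := [set 0; c].
have cM : countable M by exact: (finite_set_countable (finite_set2 0 c)).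
pose h : M -> X := fun z => if set_val z == 0 then u else v.
have [r [g _ rg] hr] := kor M cM h.
have M0 : (0 : G) \in M by apply: mem_set; left.
have Mc : c \in M by apply: mem_set; right.
have r0 := hr (exist _ 0 M0).
have rc := hr (exist _ c Mc).
rewrite /h /= eqxx in r0. rewrite /h /= (negbTE c0) in rc.
rewrite -rg /shift_act add0r in r0.
rewrite -rg /shift_act in rc.
pose m := g - a.
exists ([set r : T | U (set_val r m)], [set r : T | V (set_val r m)]) => /=.
  split; apply: mem_set.
    by rewrite /= -pa /shift_act /m subrK r0.
  rewrite /= -qb /shift_act /m.
  have -> : g - a + b = c + g by rewrite /c [RHS]addrC addrAC addrA.
  by rewrite rc.
split.
- by apply: open_comp => // z _; exact: coord_cont.
- by apply: open_comp => // z _; exact: coord_cont.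
- apply/eqP; rewrite -subset0 => z [Uz Vz].
  by have : (U `&` V) (set_val z m) by []; rewrite UV0.
Qed.
Section Dir1.
Hypothesis kor : korovin_mapping f.
Hypothesis H : forall U V : set X, open U -> open V -> U !=set0 -> V !=set0 -> U `&` V !=set0.
Variable x0 : X.
Definition Q : set_system T := fun A => exists S : seq G, exists W : G -> set X,
  (forall m, open (W m) /\ W m !=set0) /\
  [set r : T | forall m, m \in S -> W m (set_val r m)] `<=` A.
Lemma Q_filter : Filter Q.
Proof.
constructor.
- exists [::], (fun _ => setT); split => //; move=> m; split; [exact: openT | by exists x0].
- move=> A B [S [W [oW sA]]] [S' [W' [oW' sB]]].
  exists (S ++ S'), (fun m => W m `&` W' m); split.
    move=> m; split; first by apply: openI; [exact: (oW m).1 | exact: (oW' m).1].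
    by apply: H; [exact: (oW m).1 | exact: (oW' m).1 | exact: (oW m).2 | exact: (oW' m).2].
  move=> r /= hr; split.
    by apply: sA => m mS; case: (hr m); rewrite // mem_cat mS.
  by apply: sB => m mS; case: (hr m); rewrite // mem_cat mS orbT.
- move=> A B AB [S [W [oW sA]]]; exists S, W; split => //; exact: subset_trans AB.
Qed.
Lemma Q_proper A : Q A -> A !=set0.
Proof.
move=> [S [W [oW sA]]].
pose z m := xget x0 (W m).
have zW m : W m (z m) by rewrite /z; case: xgetP => // /(_ _) nW; case: (oW m).2 => y /nW.
have [p pO hp] := kor _ (finite_set_countable (finite_seq S)) (fun m => z (set_val m)).
exists (exist _ p (mem_set pO)); apply: sA => m mS /=.
have := hp (exist _ m (mem_set mS)); rewrite !set_valE /= => ->; exact: zW.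
Qed.
Lemma Q_nbhs (p : T) A : nbhs p A -> Q A.
Proof.
rewrite nbhsE => -[B [oB Bp] BA].
have QF := Q_filter.
apply: (filterS BA).
case: oB => C oC CB.
rewrite -CB.
have : nbhs (set_val p : {ptws G -> X}) C.
  by apply: open_nbhs_nbhs; split => //; rewrite -CB in Bp.
move: C {oC CB}.
change (set_val @ Q --> (set_val p : {ptws G -> X})).
apply/cvg_sup => i.
move=> N; rewrite nbhsE => -[D [oD Dp] DN].
case: oD => E oE DE.
apply: (filterS DN); rewrite -DE.
exists [:: i], (fun m => if m == i then E else setT); split.
  move=> m; case: (m == i).
    split => //; exists (set_val p i); by rewrite -DE in Dp.
  by split; [exact: openT | exists x0].
by move=> r /= /(_ i); rewrite mem_seq1 eqxx; apply.
Qed.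
End Dir1.
End S.

Theorem proposition4p2 (X : topologicalType) (G : zmodType) (f : G -> X) :
  (exists x y : X, x <> y) ->
  infinite_set [set: G] ->
  korovin_mapping f ->
  (hausdorff_space (set_type (orbit_set f)) <->
   exists U V : set X,
     [/\ open U, open V, U !=set0, V !=set0 & U `&` V = set0]).
Proof.
move=> [x [y xy]] _ kor; split; last exact: dir2.
move=> hT.
case: (pselect (exists U V : set X,
     [/\ open U, open V, U !=set0, V !=set0 & U `&` V = set0])) => // nE.
have H : forall U V : set X, open U -> open V -> U !=set0 -> V !=set0 -> U `&` V !=set0.
  move=> U V oU oV nU nV; apply/set0P/eqP => UV; apply: nE.
  by exists U, V; split.
have M0 : countable [set (0 : G)] by exact: (finite_set_countable (finite_set1 _)).
have [p1 O1 h1] := kor _ M0 (fun _ => x).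
have [p2 O2 h2] := kor _ M0 (fun _ => y).
have m0 : (0 : G) \in [set (0 : G)] by apply: mem_set.
have QF := @Q_filter _ _ f H x.
have cl : cluster (nbhs (exist _ p1 (mem_set O1) : set_type (orbit_set f)))
   (exist _ p2 (mem_set O2)).
  move=> A B nA nB.
  apply: (@Q_proper _ _ f kor x); apply: filterI; [exact: (@Q_nbhs _ _ f H x _ _ nA) | exact: (@Q_nbhs _ _ f H x _ _ nB)].
move/hT: cl => /(congr1 (fun r => set_val r 0)); rewrite !set_valE /=.
move: (h1 (exist _ 0 m0)) (h2 (exist _ 0 m0)); rewrite !set_valE /= => -> ->.
by move=> /xy.
Qed.
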